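(* Let $T\in\mathcal{B}(\mathcal{H})$ be power bounded and let $L$ be a Banach limit such that $A_{T,L}\neq 0$. Then $\|A_{T,L}\|\geq 1$. In particular, if $T$ is a contraction with $A_T\neq 0$, then $\|A_T\|=1$.
   Context: $\mathcal{H}$ is a complex Hilbert space and $\mathcal{B}(\mathcal{H})$ the algebra of bounded linear operators on it. An operator $T$ is power bounded if $\sup_{n\in\mathbb{N}}\|T^n\|<\infty$. A Banach limit is a linear functional $L$ on $\ell^\infty(\mathbb{N})$, written $\{x_n\}\mapsto \operatorname{L-lim}_{n\to\infty}x_n$, such that $\|L\|=1$, $\operatorname{L-lim}x_n=\lim x_n$ for convergent sequences, $\operatorname{L-lim}x_n\ge 0$ whenever all $x_n\ge0$, and $\operatorname{L-lim}x_n=\operatorname{L-lim}x_{n+1}$. For a power bounded $T$ and a Banach limit $L$, the $L$-asymptotic limit $A_{T,L}$ is the unique positive operator with $\langle A_{T,L}x,y\rangle=\operatorname{L-lim}_{n\to\infty}\langle T^{*n}T^nx,y\rangle$ for all $x,y\in\mathcal{H}$. For a contraction $T$ ($\|T\|\le1$), the sequence $T^{*n}T^n$ converges in the strong operator topology to a positive operator $A_T$, the asymptotic limit of $T$ (it equals $A_{T,L}$ for every Banach limit $L$). *)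

(* Defs.v *)
From Stdlib Require Import Reals Lra.
Open Scope R_scope.

Record Cplx := mkC { re : R ; im : R }.
Definition C0 : Cplx := mkC 0 0.
Definition C1 : Cplx := mkC 1 0.
Definition Cadd (a b : Cplx) : Cplx := mkC (re a + re b) (im a + im b).
Definition Cmul (a b : Cplx) : Cplx :=
  mkC (re a * re b - im a * im b) (re a * im b + im a * re b).
Definition Cconj (a : Cplx) : Cplx := mkC (re a) (- im a).

Record CHilbert := {
  carrier :> Type;
  vzero : carrier;
  vadd : carrier -> carrier -> carrier;
  vopp : carrier -> carrier;
  vscal : Cplx -> carrier -> carrier;
  inner : carrier -> carrier -> Cplx;
  vadd_assoc : forall x y z, vadd x (vadd y z) = vadd (vadd x y) z;
  vadd_comm : forall x y, vadd x y = vadd y x;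
  vadd_zero : forall x, vadd x vzero = x;
  vadd_opp : forall x, vadd x (vopp x) = vzero;
  vscal_one : forall x, vscal C1 x = x;
  vscal_mul : forall a b x, vscal (Cmul a b) x = vscal a (vscal b x);
  vscal_addv : forall a x y, vscal a (vadd x y) = vadd (vscal a x) (vscal a y);
  vscal_adds : forall a b x, vscal (Cadd a b) x = vadd (vscal a x) (vscal b x);
  inner_addl : forall x y z, inner (vadd x y) z = Cadd (inner x z) (inner y z);
  inner_scall : forall a x y, inner (vscal a x) y = Cmul a (inner x y);
  inner_conj : forall x y, inner y x = Cconj (inner x y);
  inner_pos : forall x, 0 <= re (inner x x);
  inner_def : forall x, inner x x = C0 -> x = vzero;
  complete : forall u : nat -> carrier,
    (forall eps, eps > 0 -> exists N, forall n m, (n >= N)%nat -> (m >= N)%nat ->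
        sqrt (re (inner (vadd (u n) (vopp (u m))) (vadd (u n) (vopp (u m))))) < eps) ->
    exists l, forall eps, eps > 0 -> exists N, forall n, (n >= N)%nat ->
        sqrt (re (inner (vadd (u n) (vopp l)) (vadd (u n) (vopp l)))) < eps
}.

Arguments vzero {c}. Arguments vadd {c}. Arguments vopp {c}.
Arguments vscal {c}. Arguments inner {c}.

Definition vnorm {H : CHilbert} (x : H) : R := sqrt (re (inner x x)).

Definition is_linear {H : CHilbert} (T : H -> H) : Prop :=
  (forall x y, T (vadd x y) = vadd (T x) (T y)) /\
  (forall a x, T (vscal a x) = vscal a (T x)).

Definition bounded_op {H : CHilbert} (T : H -> H) : Prop :=
  is_linear T /\ exists M, forall x, vnorm (T x) <= M * vnorm x.

Definition op_norm_is {H : CHilbert} (T : H -> H) (r : R) : Prop :=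
  is_lub (fun t => exists x : H, vnorm x <= 1 /\ t = vnorm (T x)) r.

Definition op_pow {H : CHilbert} (T : H -> H) (n : nat) : H -> H :=
  fun x => Nat.iter n T x.

Definition is_adjoint {H : CHilbert} (T S : H -> H) : Prop :=
  forall x y, inner (T x) y = inner x (S y).

Definition power_bounded {H : CHilbert} (T : H -> H) : Prop :=
  bounded_op T /\ exists M, forall n x, vnorm (op_pow T n x) <= M * vnorm x.

Definition contraction {H : CHilbert} (T : H -> H) : Prop :=
  bounded_op T /\ forall x, vnorm (T x) <= vnorm x.

Definition bounded_seq (u : nat -> R) : Prop := exists M, forall n, Rabs (u n) <= M.

Definition banach_limit (L : (nat -> R) -> R) : Prop :=
  (forall u v, bounded_seq u -> bounded_seq v -> L (fun n => u n + v n) = L u + L v) /\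
  (forall a u, bounded_seq u -> L (fun n => a * u n) = a * L u) /\
  (* ||L|| = 1 : |L u| <= sup |u_n|, and the bound is attained (L 1 = 1) *)
  (forall u M, (forall n, Rabs (u n) <= M) -> Rabs (L u) <= M) /\
  (forall u l, Un_cv u l -> L u = l) /\
  (forall u, bounded_seq u -> (forall n, 0 <= u n) -> 0 <= L u) /\
  (forall u, bounded_seq u -> L (fun n => u (S n)) = L u).

Definition C_Llim (L : (nat -> R) -> R) (z : nat -> Cplx) : Cplx :=
  mkC (L (fun n => re (z n))) (L (fun n => im (z n))).

Definition is_L_asymptotic_limit {H : CHilbert} (T Tstar : H -> H)
    (L : (nat -> R) -> R) (A : H -> H) : Prop :=
  bounded_op A /\
  forall x y, inner (A x) y = C_Llim L (fun n => inner (op_pow Tstar n (op_pow T n x)) y).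

Definition is_asymptotic_limit {H : CHilbert} (T Tstar : H -> H) (A : H -> H) : Prop :=
  bounded_op A /\
  forall x, forall eps, eps > 0 -> exists N, forall n, (n >= N)%nat ->
    vnorm (vadd (op_pow Tstar n (op_pow T n x)) (vopp (A x))) < eps.

Definition nonzero_op {H : CHilbert} (A : H -> H) : Prop := exists x, A x <> vzero.

(* Main.v *)
Require Import Defs.
From Stdlib Require Import Reals Lra Psatz FunctionalExtensionality.
Open Scope R_scope.

Definition rs (s : R) : Cplx := mkC s 0.
Definition Nn {H : CHilbert} (a : H) : R := re (inner a a).

Lemma re_addl (H : CHilbert) (a b c : H) :
  re (inner (vadd a b) c) = re (inner a c) + re (inner b c).
Proof. rewrite inner_addl. reflexivity. Qed.

Lemma re_scall (H : CHilbert) s (a c : H) :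
  re (inner (vscal (rs s) a) c) = s * re (inner a c).
Proof. rewrite inner_scall. simpl. ring. Qed.

Lemma re_sym (H : CHilbert) (a b : H) : re (inner a b) = re (inner b a).
Proof. rewrite (inner_conj H b a). reflexivity. Qed.

Lemma im_self (H : CHilbert) (a : H) : im (inner a a) = 0.
Proof.
  pose proof (f_equal im (inner_conj H a a)) as E. simpl in E. lra.
Qed.

Lemma Nn_pos (H : CHilbert) (a : H) : 0 <= Nn a.
Proof. apply inner_pos. Qed.

Lemma Nn_zero (H : CHilbert) (a : H) : Nn a = 0 -> a = vzero.
Proof.
  intro E. apply inner_def.
  assert (E2 : inner a a = mkC (re (inner a a)) (im (inner a a)))
    by (destruct (inner a a); reflexivity).
  rewrite E2. unfold Nn in E. rewrite E, im_self. reflexivity.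
Qed.

Lemma Nn_sq (H : CHilbert) (a : H) : Nn a = vnorm a * vnorm a.
Proof. unfold vnorm. rewrite sqrt_sqrt; [reflexivity| apply inner_pos]. Qed.

Lemma vnorm_pos (H : CHilbert) (a : H) : 0 <= vnorm a.
Proof. apply sqrt_pos. Qed.

Lemma discr (a b c : R) : 0 <= a -> (forall s, 0 <= a*s*s + 2*b*s + c) -> b*b <= a*c.
Proof.
  intros Ha Hs. destruct (Req_dec a 0) as [E|E].
  - subst a. destruct (Req_dec b 0) as [Eb|Eb].
    + subst. lra.
    + exfalso. specialize (Hs (-(c+1)/(2*b))).
      assert (2 * b * (- (c + 1) / (2 * b)) = -(c+1)) by (field; auto). nra.
  - specialize (Hs (-b/a)).
    assert (a * (- b / a) * (- b / a) = b*b/a) by (field; auto).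
    assert (2 * b * (- b / a) = -2*(b*b/a)) by (field; auto).
    assert (0 <= c - b*b/a) by lra.
    assert (b*b/a * a = b*b) by (field; auto).
    assert (0 < a) by lra. nra.
Qed.

Lemma form_CS (H : CHilbert) (g : H -> H -> R)
  (gaddl : forall a b c, g (vadd a b) c = g a c + g b c)
  (gscall : forall s a c, g (vscal (rs s) a) c = s * g a c)
  (gsym : forall a b, g a b = g b a)
  (gpos : forall a, 0 <= g a a) :
  forall a b, g a b * g a b <= g a a * g b b.
Proof.
  intros a b. apply discr; [apply gpos|]. intro s.
  pose proof (gpos (vadd (vscal (rs s) a) b)) as P.
  rewrite gaddl, !gscall in P.
  rewrite (gsym a (vadd _ _)), (gsym b (vadd _ _)), !gaddl, !gscall in P.
  rewrite (gsym b a) in P. nra.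
Qed.

Lemma re_CS (H : CHilbert) (a b : H) : re (inner a b) * re (inner a b) <= Nn a * Nn b.
Proof.
  apply (form_CS H (fun a b => re (inner a b))).
  - apply re_addl. - apply re_scall. - apply re_sym. - apply inner_pos.
Qed.

Lemma re_abs_bound (H : CHilbert) (a b : H) : Rabs (re (inner a b)) <= vnorm a * vnorm b.
Proof.
  pose proof (re_CS H a b). rewrite !Nn_sq in H0.
  pose proof (vnorm_pos H a). pose proof (vnorm_pos H b).
  assert (0 <= vnorm a * vnorm b) by nra.
  destruct (Rle_dec (Rabs (re (inner a b))) (vnorm a * vnorm b)) as [h|h]; [exact h|].
  exfalso. apply Rnot_le_lt in h.
  assert (Rabs (re (inner a b)) * Rabs (re (inner a b)) = re (inner a b) * re (inner a b))
    by (rewrite <- Rabs_mult; apply Rabs_pos_eq; nra).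
  nra.
Qed.

Lemma Nn_scal (H : CHilbert) c (a : H) : Nn (vscal (rs c) a) = c * c * Nn a.
Proof.
  unfold Nn. rewrite re_scall, re_sym, re_scall. ring.
Qed.

Lemma iter_T (H : CHilbert) (T : H -> H) n z : op_pow T n (T z) = op_pow T (S n) z.
Proof. unfold op_pow. rewrite Nat.iter_succ_r. reflexivity. Qed.

Lemma adj_pow (H : CHilbert) (T Ts : H -> H) : is_adjoint T Ts ->
  forall n u z, inner (op_pow Ts n u) z = inner u (op_pow T n z).
Proof.
  intros Had n. induction n as [|n IH]; intros u z; [reflexivity|].
  change (op_pow Ts (S n) u) with (Ts (op_pow Ts n u)).
  rewrite (inner_conj H z), <- Had, <- inner_conj, IH, iter_T. reflexivity.
Qed.

Lemma re_zero (H : CHilbert) (y : H) : re (inner vzero y) = 0.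
Proof.
  pose proof (re_addl H vzero vzero y). rewrite vadd_zero in H0. lra.
Qed.

Lemma re_opp (H : CHilbert) (v y : H) : re (inner (vopp v) y) = - re (inner v y).
Proof.
  pose proof (re_addl H v (vopp v) y). rewrite vadd_opp, re_zero in H0. lra.
Qed.

Lemma core (H : CHilbert) (T A : H -> H) r :
  is_linear A ->
  (forall x y, re (inner (A x) y) = re (inner (A y) x)) ->
  (forall z, 0 <= re (inner (A z) z)) ->
  (forall z, re (inner (A (T z)) (T z)) = re (inner (A z) z)) ->
  (forall x c k, (forall n, c <= k * Nn (op_pow T n x)) -> c <= k * re (inner (A x) x)) ->
  nonzero_op A -> op_norm_is A r -> 1 <= r.
Proof.
  intros [Aadd Ascal] Asym Apos Ashift Alim [x0 Hx0] [Hub Hlub].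
  set (q := fun z => re (inner (A z) z)).
  assert (FCS : forall a b, re (inner (A a) b) * re (inner (A a) b) <= q a * q b).
  { apply (form_CS H (fun a b => re (inner (A a) b))).
    - intros. rewrite Aadd. apply re_addl.
    - intros. rewrite Ascal. apply re_scall.
    - exact Asym. - exact Apos. }
  assert (Hbound : forall y, q y <= r * Nn y).
  { intro y. pose proof (Nn_pos H y) as Py.
    destruct (Req_dec (Nn y) 0) as [E|E].
    - pose proof (re_CS H (A y) y) as C. rewrite E in C |- *.
      unfold q. rewrite Rmult_0_r in C. nra.
    - set (c := / sqrt (Nn y)).
      assert (Hs : 0 < sqrt (Nn y)) by (apply sqrt_lt_R0; lra).
      assert (Hc2 : c * c * Nn y = 1).
      { unfold c. rewrite <- (sqrt_sqrt (Nn y)) at 3 by lra. field. lra. }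
      assert (Hy1 : vnorm (vscal (rs c) y) <= 1).
      { unfold vnorm. change (re _) with (Nn (vscal (rs c) y)).
        rewrite Nn_scal, Hc2, sqrt_1. lra. }
      assert (HA := Hub _ (ex_intro _ _ (conj Hy1 eq_refl))).
      rewrite Ascal in HA.
      pose proof (vnorm_pos H (vscal (rs c) (A y))) as P0.
      assert (Nn (vscal (rs c) (A y)) <= r * r) by (rewrite Nn_sq; nra).
      rewrite Nn_scal in H0.
      assert (Nn (A y) <= r * r * Nn y).
      { assert (c * c * Nn (A y) * Nn y <= r * r * Nn y) by nra.
        assert (c * c * Nn (A y) * Nn y = Nn (A y)) by
          (replace (c * c * Nn (A y) * Nn y) with (c*c*Nn y * Nn (A y)) by ring;
           rewrite Hc2; ring).
        lra. }
      pose proof (re_CS H (A y) y) as C.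
      assert (0 <= r) by lra.
      pose proof (Apos y). unfold q.
      assert (re (inner (A y) y) * re (inner (A y) y) <= (r * Nn y) * (r * Nn y)).
      { apply Rle_trans with (Nn (A y) * Nn y); [exact C|]. 
        replace ((r * Nn y) * (r * Nn y)) with ((r*r*Nn y) * Nn y) by ring.
        apply Rmult_le_compat_r; lra. }
      assert (0 <= r * Nn y) by (apply Rmult_le_pos; lra).
      destruct (Rle_dec (re (inner (A y) y)) (r * Nn y)) as [h|h]; [exact h|].
      exfalso. apply Rnot_le_lt in h. nra. }
  assert (Hpow : forall n z, q (op_pow T n z) = q z).
  { induction n; intro z; [reflexivity|].
    change (op_pow T (S n) z) with (T (op_pow T n z)). unfold q in *.
    rewrite Ashift. apply IHn. }
  assert (Hq0 : 0 < q x0).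
  { assert (0 < Nn (A x0)).
    { destruct (Nn_pos H (A x0)) as [h|h]; [exact h|].
      exfalso. apply Hx0. apply Nn_zero. auto. }
    pose proof (FCS x0 (A x0)). change (re (inner (A x0) (A x0))) with (Nn (A x0)) in H1.
    pose proof (Apos x0). pose proof (Apos (A x0)). unfold q in *.
    destruct H2 as [h|h]; [exact h|]. rewrite <- h in H1. nra. }
  assert (q x0 <= r * q x0).
  { apply Alim. intro n. rewrite <- (Hpow n x0). apply Hbound. }
  nra.
Qed.

Lemma cv_const c : Un_cv (fun _ => c) c.
Proof.
  intros eps He. exists 0%nat. intros. unfold R_dist.
  replace (c - c) with 0 by ring. rewrite Rabs_R0. lra.
Qed.

Lemma cv_le_const u l c : Un_cv u l -> (forall n, u n <= c) -> l <= c.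
Proof.
  intros Hu Hc. destruct (Rle_dec l c) as [h|h]; [exact h|]. exfalso.
  destruct (Hu (l - c)) as [N HN]; [lra|].
  specialize (HN N (le_n _)). specialize (Hc N). unfold R_dist in HN.
  apply Rabs_def2 in HN. lra.
Qed.

Lemma cv_ge_const u l c : Un_cv u l -> (forall n, c <= u n) -> c <= l.
Proof.
  intros Hu Hc. destruct (Rle_dec c l) as [h|h]; [exact h|]. exfalso.
  destruct (Hu (c - l)) as [N HN]; [lra|].
  specialize (HN N (le_n _)). specialize (Hc N). unfold R_dist in HN.
  apply Rabs_def2 in HN. lra.
Qed.

Lemma cv_shift u l : Un_cv u l -> Un_cv (fun n => u (S n)) l.
Proof.
  intros Hu eps He. destruct (Hu eps He) as [N HN]. exists N. intros. apply HN. lia.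
Qed.

Lemma bseq_scal k u : bounded_seq u -> bounded_seq (fun n => k * u n).
Proof.
  intros [M HM]. exists (Rabs k * M). intro n. rewrite Rabs_mult.
  apply Rmult_le_compat_l; [apply Rabs_pos| apply HM].
Qed.

Lemma bseq_const c : bounded_seq (fun _ => c).
Proof. exists (Rabs c). intro. lra. Qed.

Lemma part1 : forall (H : CHilbert) (T Tstar : H -> H) (L : (nat -> R) -> R) (A : H -> H),
     power_bounded T -> is_adjoint T Tstar -> banach_limit L ->
     is_L_asymptotic_limit T Tstar L A -> nonzero_op A ->
     forall r, op_norm_is A r -> 1 <= r.
Proof.
  intros H T Ts L A [_ [M HM]] Had [Ladd [Lscal [_ [Llim [Lpos Lshift]]]]] [[Alin _] HA] Hnz r Hr.
  set (f := fun x y n => re (inner (op_pow T n x) (op_pow T n y))).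
  assert (Lrep : forall x y, re (inner (A x) y) = L (f x y)).
  { intros. rewrite HA. simpl. f_equal. apply functional_extensionality. intro n.
    unfold f. rewrite (adj_pow H T Ts Had). reflexivity. }
  assert (NB : forall n a, Nn (op_pow T n a) <= (M * vnorm a) * (M * vnorm a)).
  { intros. rewrite Nn_sq. pose proof (HM n a). pose proof (vnorm_pos H (op_pow T n a)). nra. }
  assert (bs : forall x y, bounded_seq (f x y)).
  { intros. exists ((M * vnorm x) * (M * vnorm x) + (M * vnorm y) * (M * vnorm y)).
    intro n. unfold f. pose proof (re_abs_bound H (op_pow T n x) (op_pow T n y)).
    pose proof (NB n x). pose proof (NB n y). rewrite !Nn_sq in *.
    pose proof (vnorm_pos H (op_pow T n x)). pose proof (vnorm_pos H (op_pow T n y)).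
    nra. }
  apply (core H T A r Alin).
  - intros. rewrite !Lrep. f_equal. apply functional_extensionality. intro n.
    unfold f. apply re_sym.
  - intros. rewrite Lrep. apply Lpos; [apply bs|]. intro. apply inner_pos.
  - intros. rewrite !Lrep. rewrite <- (Lshift (f z z)) by apply bs. f_equal.
    apply functional_extensionality. intro n. unfold f. rewrite iter_T. reflexivity.
  - intros x c k Hn. rewrite Lrep.
    pose proof (Lpos (fun n => k * f x x n + - c)) as P.
    pose proof (Ladd (fun n => k * f x x n) (fun _ => - c) (bseq_scal k _ (bs x x)) (bseq_const (-c))) as E.
    simpl in E. rewrite E, Lscal, (Llim _ (-c) (cv_const _)) in P by apply bs.
    assert (0 <= k * L (f x x) + - c); [|lra].
    apply P.
    + destruct (bseq_scal k _ (bs x x)) as [B HB]. exists (B + Rabs c). intro n.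
      pose proof (Rabs_triang (k * f x x n) (-c)). rewrite Rabs_Ropp in H0.
      specialize (HB n). simpl in HB. lra.
    + intro n. specialize (Hn n). unfold f, Nn in *. lra.
  - exact Hnz.
  - exact Hr.
Qed.

Lemma part2 : forall (H : CHilbert) (T Tstar : H -> H) (A : H -> H),
     contraction T -> is_adjoint T Tstar ->
     is_asymptotic_limit T Tstar A -> nonzero_op A ->
     forall r, op_norm_is A r -> r = 1.
Proof.
  intros H T Ts A [_ Hc] Had [[Alin _] HA] Hnz r Hr.
  set (f := fun x y n => re (inner (op_pow T n x) (op_pow T n y))).
  assert (Lrep : forall x y, Un_cv (f x y) (re (inner (A x) y))).
  { intros x y eps He. set (K := vnorm y + 1).
    assert (HK : 0 < K) by (pose proof (vnorm_pos H y); unfold K; lra).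
    destruct (HA x (eps / K)) as [N HN]; [apply Rdiv_lt_0_compat; lra|].
    exists N. intros n Hn. specialize (HN n Hn). unfold R_dist, f.
    rewrite <- (adj_pow H T Ts Had).
    set (u := op_pow Ts n (op_pow T n x)) in *.
    assert (E : re (inner u y) - re (inner (A x) y) = re (inner (vadd u (vopp (A x))) y))
      by (rewrite re_addl, re_opp; ring).
    rewrite E. eapply Rle_lt_trans; [apply re_abs_bound|].
    pose proof (vnorm_pos H (vadd u (vopp (A x)))). pose proof (vnorm_pos H y).
    apply Rle_lt_trans with ((eps / K) * vnorm y); [nra|].
    assert (eps / K * K = eps) by (field; lra).
    assert (vnorm y < K) by (unfold K; lra).
    assert (0 < eps / K) by (apply Rdiv_lt_0_compat; lra). nra. }
  assert (Hpos : forall z, 0 <= re (inner (A z) z)).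
  { intro z. apply (cv_ge_const _ _ _ (Lrep z z)). intro. apply inner_pos. }
  assert (Hsym : forall x y, re (inner (A x) y) = re (inner (A y) x)).
  { intros. apply (UL_sequence (f x y)); [apply Lrep|].
    replace (f x y) with (f y x); [apply Lrep|].
    apply functional_extensionality. intro. unfold f. apply re_sym. }
  assert (Hdec : forall n z, Nn (op_pow T n z) <= Nn z).
  { induction n; intro z; [simpl; lra|].
    change (op_pow T (S n) z) with (T (op_pow T n z)).
    eapply Rle_trans; [|apply IHn]. rewrite !Nn_sq.
    pose proof (Hc (op_pow T n z)). pose proof (vnorm_pos H (T (op_pow T n z))). nra. }
  assert (Hqle : forall z, re (inner (A z) z) <= Nn z).
  { intro z. apply (cv_le_const _ _ _ (Lrep z z)). intro n. apply Hdec. }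
  apply Rle_antisym.
  - destruct Hr as [_ Hlub]. apply Hlub. intros t [x [Hx ->]].
    destruct Alin as [Aadd Ascal].
    assert (FCS : forall a b, re (inner (A a) b) * re (inner (A a) b)
                    <= re (inner (A a) a) * re (inner (A b) b)).
    { apply (form_CS H (fun a b => re (inner (A a) b))).
      - intros. rewrite Aadd. apply re_addl.
      - intros. rewrite Ascal. apply re_scall.
      - exact Hsym. - exact Hpos. }
    pose proof (FCS x (A x)). change (re (inner (A x) (A x))) with (Nn (A x)) in H0.
    pose proof (Hqle x). pose proof (Hqle (A x)). pose proof (Hpos x). pose proof (Hpos (A x)).
    pose proof (Nn_pos H (A x)). pose proof (Nn_pos H x).
    assert (Nn (A x) <= Nn x).
    { destruct H5 as [h|h]; [|rewrite <- h; lra].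
      assert (Nn (A x) * Nn (A x) <= Nn x * Nn (A x)).
      { eapply Rle_trans; [exact H0|]. apply Rle_trans with (Nn x * re (inner (A (A x)) (A x))).
        apply Rmult_le_compat_r; lra. apply Rmult_le_compat_l; lra. }
      nra. }
    assert (Nn x <= 1) by (rewrite Nn_sq; pose proof (vnorm_pos H x); nra).
    unfold vnorm. rewrite <- sqrt_1. apply sqrt_le_1_alt. unfold Nn in *. lra.
  - apply (core H T A r Alin Hsym Hpos).
    + intro z. apply (UL_sequence (f (T z) (T z))); [apply Lrep|].
      replace (f (T z) (T z)) with (fun n => f z z (S n)); [apply cv_shift, Lrep|].
      apply functional_extensionality. intro. unfold f. rewrite !iter_T. reflexivity.
    + intros x c k Hn. apply (cv_ge_const (fun n => k * f x x n)).
      * apply (CV_mult (fun _ => k)); [apply cv_const| apply Lrep].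
      * intro n. apply Hn.
    + exact Hnz.
    + exact Hr.
Qed.

Theorem mainTheorem1 :
  (forall (H : CHilbert) (T Tstar : H -> H) (L : (nat -> R) -> R) (A : H -> H),
     power_bounded T -> is_adjoint T Tstar -> banach_limit L ->
     is_L_asymptotic_limit T Tstar L A -> nonzero_op A ->
     forall r, op_norm_is A r -> 1 <= r) /\
  (forall (H : CHilbert) (T Tstar : H -> H) (A : H -> H),
     contraction T -> is_adjoint T Tstar ->
     is_asymptotic_limit T Tstar A -> nonzero_op A ->
     forall r, op_norm_is A r -> r = 1).
Proof. split; [exact part1 | exact part2]. Qed.
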